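(* Let $g$ be a feasible subflow allocation with demand totals $f=(f_k)_{k\in\mathcal{D}}$. If $f$ is max-min fair, i.e. there is no feasible subflow allocation whose totals $f'$ satisfy $f'_k>f_k$ for some $k$ while $f'_j\ge f_j$ for every $j$ with $f_j\le f_k$, then $g$ is bandwidth-bottlenecked.
   Context: Demands $\mathcal{D}$, links $\mathcal{E}$ with capacities $c_e>0$, each demand $k$ with requested rate $d_k>0$ and finite path set $\mathcal{P}_k$ (paths are subsets of $\mathcal{E}$). Each pair $(k,p)$, $p\in\mathcal{P}_k$, is a subflow. Augmented network: in addition to the links in $\mathcal{E}$, each demand $k$ has a virtual link $v_k$ of capacity $d_k$; subflow $(k,p)$ traverses the links of $p$ together with $v_k$. A subflow allocation $g=(g_{k,p})\ge 0$ is feasible if $\sum_{(k,p):e\in p}g_{k,p}\le c_e$ for all $e\in\mathcal{E}$ and $\sum_{p\in\mathcal{P}_k}g_{k,p}\le d_k$ for all $k$; its demand totals are $f_k=\sum_{p\in\mathcal{P}_k}g_{k,p}$. A link is saturated if its capacity constraint holds with equality. A feasible subflow allocation $g$ with totals $f$ is bandwidth-bottlenecked if for every demand $k$ and every $p\in\mathcal{P}_k$ there is a saturated link $l$ on the augmented path of $(k,p)$ such that $f_k\ge f_j$ for every demand $j$ having a subflow with positive rate traversing $l$. *)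

(* Defs.v *)
From mathcomp Require Import all_boot all_order all_algebra.
From mathcomp Require Import reals.
Set Implicit Arguments. Unset Strict Implicit. Unset Printing Implicit Defensive.
Import Order.TTheory GRing.Theory Num.Theory.
Local Open Scope ring_scope.

Section Network.
Variables (R : realType) (D E : finType).
(* c : link capacities, d : requested rates, P k : finite set of paths of k *)
Variables (c : E -> R) (d : D -> R) (P : D -> {set {set E}}).

(* A subflow allocation assigns a rate g k p to each subflow (k,p), p \in P k;
   values at p \notin P k are irrelevant and ignored. *)
Definition total (g : D -> {set E} -> R) (k : D) : R := \sum_(p in P k) g k p.

(* Links of the augmented network: real links (inl e) and virtual links (inr k). *)
Definition aug_link := (E + D)%type.

Definition aug_cap (l : aug_link) : R :=
  match l with inl e => c e | inr k => d k end.

Definition traverses (j : D) (q : {set E}) (l : aug_link) : bool :=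
  match l with inl e => e \in q | inr k => j == k end.

Definition aug_load (g : D -> {set E} -> R) (l : aug_link) : R :=
  \sum_(j : D) \sum_(q in P j | traverses j q l) g j q.

Definition feasible (g : D -> {set E} -> R) : Prop :=
  (forall k p, p \in P k -> 0 <= g k p) /\
  (forall e : E, aug_load g (inl e) <= c e) /\
  (forall k : D, total g k <= d k).

Definition saturated (g : D -> {set E} -> R) (l : aug_link) : Prop :=
  aug_load g l = aug_cap l.

Definition bandwidth_bottlenecked (g : D -> {set E} -> R) : Prop :=
  feasible g /\
  forall k p, p \in P k ->
    exists l : aug_link,
      [/\ traverses k p l, saturated g l &
          forall j q, q \in P j -> traverses j q l -> 0 < g j q ->
            total g j <= total g k].

Definition max_min_fair (g : D -> {set E} -> R) : Prop :=
  ~ exists g' : D -> {set E} -> R,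
      feasible g' /\
      exists k, total g k < total g' k /\
        forall j, total g j <= total g k -> total g j <= total g' j.

End Network.

(* Main.v *)
Require Import Defs.
From mathcomp Require Import all_boot all_order all_algebra.
From mathcomp Require Import reals.
From mathcomp Require Import lra.
From Stdlib Require Import Classical.
Import Order.TTheory GRing.Theory Num.Theory.
Local Open Scope ring_scope.

Lemma eps_exists (R : realType) (T : finType) (a : T -> R) :
  exists eps : R, 0 < eps /\ forall t, 0 < a t -> eps <= a t.
Proof.
suff H : forall s : seq T, exists eps : R, 0 < eps /\
    forall t, t \in s -> 0 < a t -> eps <= a t.
  have [eps [e0 He]] := H (enum T).
  by exists eps; split=> // t; apply: He; rewrite mem_enum.
elim=> [|x s [eps [e0 He]]]; first by exists 1; split.
have [hx|hx] := ltP 0 (a x).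
- exists (Num.min eps (a x)); split; first by rewrite lt_min e0 hx.
  move=> t; rewrite inE => /orP [/eqP -> _ | ts ht].
    by rewrite ge_min lexx orbT.
  by rewrite ge_min He.
- exists eps; split=> // t; rewrite inE => /orP [/eqP -> hx' | ts ht].
    by have := lt_le_trans hx' hx; rewrite ltxx.
  exact: He.
Qed.

Lemma sum_ge_one (R : realType) (I : finType) (Q : pred I) (F : I -> R) i :
  Q i -> (forall j, Q j -> 0 <= F j) -> F i <= \sum_(j | Q j) F j.
Proof.
move=> hi h0; rewrite (bigD1 i) //= lerDl sumr_ge0 // => j /andP[? _].
exact: h0.
Qed.

Lemma load_lin (R : realType) (D E : finType) (P : D -> {set {set E}})
  (g a b : D -> {set E} -> R) l :
  aug_load P (fun j q => g j q + a j q - b j q) l =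
  aug_load P g l + aug_load P a l - aug_load P b l.
Proof.
rewrite /aug_load -big_split -sumrB /=; apply: eq_bigr => j _.
by rewrite -big_split -sumrB.
Qed.

Lemma tot_lin (R : realType) (D E : finType) (P : D -> {set {set E}})
  (g a b : D -> {set E} -> R) j :
  Defs.total P (fun j q => g j q + a j q - b j q) j =
  Defs.total P g j + Defs.total P a j - Defs.total P b j.
Proof. by rewrite /Defs.total -big_split -sumrB. Qed.

Lemma load_inr (R : realType) (D E : finType) (P : D -> {set {set E}})
  (g : D -> {set E} -> R) j :
  aug_load P g (inr j) = Defs.total P g j.
Proof.
rewrite /aug_load (bigD1 j) //= [X in _ + X]big1 ?addr0.
  by apply: eq_bigl => q; rewrite eqxx andbT.
move=> i hi; apply: big1 => q /andP[_ hq].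
by move: hi; rewrite (eqP hq) eqxx.
Qed.

Theorem mainTheorem4 (R : realType) (D E : finType)
  (c : E -> R) (d : D -> R) (P : D -> {set {set E}})
  (hc : forall e, 0 < c e) (hd : forall k, 0 < d k)
  (g : D -> {set E} -> R) :
  feasible c d P g -> max_min_fair c d P g -> bandwidth_bottlenecked c d P g.
Proof.
move=> hf hmmf; split=> // k p hp.
case: (classic (exists l : aug_link D E,
      [/\ traverses k p l, saturated c d P g l &
          forall j q, q \in P j -> traverses j q l -> 0 < g j q ->
            Defs.total P g j <= Defs.total P g k])) => [//|hno].
exfalso; apply: hmmf.
have key : forall l, traverses k p l -> saturated c d P g l ->
    exists j q, [/\ q \in P j, traverses j q l, 0 < g j q &
                    Defs.total P g k < Defs.total P g j].
  move=> l ht hs; apply: NNPP => hne; apply: hno; exists l; split=> // j q hq htr hg.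
  rewrite leNgt; apply/negP => hlt; apply: hne; by exists j, q.
have [eps1 [e10 He1]] := eps_exists _ _ (fun t : D * {set E} => g t.1 t.2).
have [eps2 [e20 He2]] :=
  eps_exists _ _ (fun l : aug_link D E => aug_cap c d l - aug_load P g l).
set eps := Num.min eps1 eps2.
have e0 : 0 < eps by rewrite lt_min e10 e20.
have ee1 : eps <= eps1 by rewrite ge_min lexx.
have ee2 : eps <= eps2 by rewrite ge_min lexx orbT.
pose a := fun j q => if (j == k) && (q == p) then eps else 0.
pose b := fun j q => if (0 < g j q) && (Defs.total P g k < Defs.total P g j) then eps else 0.
have ha0 : forall j q, 0 <= a j q by move=> j q; rewrite /a; case: ifP => // _; exact: ltW.
have hb0 : forall j q, 0 <= b j q by move=> j q; rewrite /b; case: ifP => // _; exact: ltW.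
have [hg0 [hge hgd]] := hf.
have hfl : forall l, aug_load P g l <= aug_cap c d l.
  by case=> [e|j] /=; [exact: hge | rewrite load_inr; exact: hgd].
have hA : forall l, aug_load P a l <= (if traverses k p l then eps else 0).
  move=> l; rewrite /aug_load (bigD1 k) //= [X in _ + X]big1 ?addr0; last first.
    move=> j hj; apply: big1 => q _; by rewrite /a (negbTE hj).
  case: ifP => ht.
    rewrite (bigD1 p) /=; last by rewrite hp ht.
    rewrite /a !eqxx /= big1 ?addr0 // => q /andP[_ hq]; by rewrite (negbTE hq).
  rewrite big1 // => q /andP[_ htq]; rewrite /a eqxx /=; case: eqP => // eqq.
  by move: htq; rewrite eqq ht.
exists (fun j q => g j q + a j q - b j q); split.
  have hload : forall l, aug_load P (fun j q => g j q + a j q - b j q) l <= aug_cap c d l.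
    move=> l; rewrite load_lin.
    have hB0 : 0 <= aug_load P b l.
      by apply: sumr_ge0 => j _; apply: sumr_ge0 => q _; exact: hb0.
    have := hA l; have := hfl l; case: ifP => ht hl hAl; last by lra.
    have [hs|hns] := eqVneq (aug_load P g l) (aug_cap c d l).
      have [j [q [hq htq hgq hlt]]] := key l ht hs.
      have hB : eps <= aug_load P b l.
        apply: le_trans (_ : \sum_(q in P j | traverses j q l) b j q <= _).
          have -> : eps = b j q by rewrite /b hgq hlt.
          by apply: sum_ge_one => [|q' _]; [rewrite hq htq | exact: hb0].
        apply: sum_ge_one => // j' _; apply: sumr_ge0 => q' _; exact: hb0.
      lra.
    have hlt : 0 < aug_cap c d l - aug_load P g l.
      by rewrite subr_gt0 lt_neqAle hns hl.
    have := He2 _ hlt; lra.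
  split; last split.
  - move=> j q hq.
    have := hg0 j q hq; have := ha0 j q; rewrite /b.
    case: ifP => [/andP[hg _]|_]; last by lra.
    have := He1 (j, q) hg; rewrite /=; lra.
  - move=> e; exact: (hload (inl e)).
  - move=> j; rewrite -load_inr; exact: (hload (inr j)).
have hTB : forall j, ~~ (Defs.total P g k < Defs.total P g j) -> Defs.total P b j = 0.
  move=> j hj; apply: big1 => q _; by rewrite /b (negbTE hj) andbF.
have hTA : forall j, 0 <= Defs.total P a j by move=> j; apply: sumr_ge0 => q _; exact: ha0.
exists k; split.
  rewrite tot_lin hTB ?ltxx //.
  have : eps <= Defs.total P a k.
    have -> : eps = a k p by rewrite /a !eqxx.
    by apply: sum_ge_one => // q _; exact: ha0.
  lra.
move=> j hj; rewrite tot_lin hTB; last by rewrite -leNgt.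
have := hTA j; lra.
Qed.
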